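(* Let $(\overline M,\varphi,\xi,\eta,g)$ be an almost $(\epsilon)$-contact metric manifold, $k\ge1$, $M$ as in the context, $D=\bigoplus_{i=0}^kD_i$ a $k$-slant distribution on $M$ with invariant component $D_0$ and $D\perp\xi$, and $G$ the orthogonal complement of $D\oplus\langle\xi\rangle$ in $T\overline M|_M$. Then for each $i=1,\dots,k$: $f(w(D_i))=D_i$, and the maps $w|_{D_i}:D_i\to w(D_i)$ and $f|_{w(D_i)}:w(D_i)\to D_i$ are injective at every point; consequently $w(D_i)$ is a distribution of the same rank as $D_i$. Moreover $f(G)=\bigoplus_{i=1}^kD_i$.
   Context: An almost $(\epsilon)$-contact metric manifold $(\overline M,\varphi,\xi,\eta,g)$, $\epsilon\in\{-1,1\}$, is a Riemannian manifold $(\overline M,g)$ with a unit vector field $\xi$, its dual 1-form $\eta(X)=g(X,\xi)$, and a $(1,1)$-tensor field $\varphi$ with $g(\varphi X,Y)=\epsilon g(X,\varphi Y)$ and $\varphi^2=\epsilon(I-\eta\otimes\xi)$. $M$ is either $\overline M$ or an immersed submanifold with $\xi$ tangent to $M$; $\langle\xi\rangle$ is the line bundle spanned by $\xi$. A distribution on $M$ is a smooth subbundle of constant rank of $T\overline M|_M$. For a distribution $D$ and $Z\in T_x\overline M$, $fZ$, $wZ$ are the $g$-orthogonal projections of $\varphi Z$ onto $D_x$ and onto its orthogonal complement $D_x^\perp$ in $T_x\overline M$; $f$ is the component of $\varphi$ into $D$. The angle between a nonzero vector $u$ and a subspace $V$ is $\theta\in[0,\frac\pi2]$ with $\cos\theta=\|\mathrm{pr}_Vu\|/\|u\|$.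 A non-null distribution $D$ is slant with slant angle $\theta\in(0,\frac\pi2]$ if for all $x\in M$, $v\in D_x\setminus\{0\}$: $\varphi v\ne0$ and the angle between $\varphi v$ and $D_x$ is $\theta$. For $k\ge1$, $D$ is a $k$-slant distribution if there is a $g$-orthogonal decomposition $D=\bigoplus_{i=0}^kD_i$ into distributions with $D_i\ne\{0\}$ ($1\le i\le k$), $D_0$ possibly $\{0\}$, and pairwise distinct $\theta_1,\dots,\theta_k\in(0,\frac\pi2]$ with: (i) $D_i$ slant with angle $\theta_i$ ($1\le i\le k$); (ii) $\varphi(D_0)\subseteq D_0$; (iii) $f(D_i)\subseteq D_i$ ($1\le i\le k$). $D_0$ is the invariant component. *)

(* Defs.v *)
From HB Require Import structures.
From mathcomp Require Import all_boot all_order all_algebra.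
From mathcomp Require Import all_classical all_reals all_analysis.
From Stdlib Require Import ClassicalEpsilon.
Set Implicit Arguments. Unset Strict Implicit. Unset Printing Implicit Defensive.
Import Order.TTheory GRing.Theory Num.Theory.
Local Open Scope ring_scope.

(* Pointwise (linear-algebra) model of T_x Mbar at a point x of M:
   V is a finite-dimensional real vector space, g an inner product on it. *)

Section Defs.
Variables (R : realType) (V : vectType R).

Definition inner_product (g : V -> V -> R) : Prop :=
  [/\ forall a u v w, g (a *: u + v) w = a * g u w + g v w,
      forall u v, g u v = g v u
    & forall u, u != 0 -> 0 < g u u].

Definition gnorm (g : V -> V -> R) (u : V) : R := Num.sqrt (g u u).

Definition almost_eps_contact_metric (eps : R) (phi : 'End(V)) (xi : V)
    (g : V -> V -> R) : Prop :=
  [/\ eps = 1 \/ eps = -1,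
      inner_product g,
      g xi xi = 1,
      forall X Y, g (phi X) Y = eps * g X (phi Y)
    & forall X, phi (phi X) = eps *: (X - g X xi *: xi)].

Definition orthc (g : V -> V -> R) (U : {vspace V}) (u : V) : Prop :=
  forall y, y \in U -> g u y = 0.

Definition gproj (g : V -> V -> R) (P : V -> Prop) (u : V) : V :=
  epsilon (inhabits (0 : V))
    (fun p => P p /\ forall y, P y -> g (u - p) y = 0).

Definition fcomp (g : V -> V -> R) (phi : 'End(V)) (D : {vspace V}) (Z : V) : V :=
  gproj g (fun y => y \in D) (phi Z).
Definition wcomp (g : V -> V -> R) (phi : 'End(V)) (D : {vspace V}) (Z : V) : V :=
  gproj g (orthc g D) (phi Z).

Definition angle_is (g : V -> V -> R) (u : V) (U : {vspace V}) (theta : R) : Prop :=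
  0 <= theta <= pi / 2 /\
  cos theta = gnorm g (gproj g (fun y => y \in U) u) / gnorm g u.

Definition slant_at (g : V -> V -> R) (phi : 'End(V)) (U : {vspace V}) (theta : R) : Prop :=
  [/\ U != 0%VS,
      0 < theta <= pi / 2
    & forall v, v \in U -> v != 0 ->
        phi v != 0 /\ angle_is g (phi v) U theta].

Definition k_slant_at (k : nat) (g : V -> V -> R) (phi : 'End(V))
    (D : {vspace V}) (Ds : 'I_k.+1 -> {vspace V}) (theta : 'I_k.+1 -> R) : Prop :=
  [/\ D = (\sum_(i < k.+1) Ds i)%VS,
      (forall i j, i != j -> forall u v, u \in Ds i -> v \in Ds j -> g u v = 0),
      (forall i j : 'I_k.+1, i != ord0 -> j != ord0 -> i != j -> theta i != theta j)
    & (forall i : 'I_k.+1, i != ord0 -> slant_at g phi (Ds i) (theta i)) /\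
      (forall v, v \in Ds ord0 -> phi v \in Ds ord0) /\
      (forall i : 'I_k.+1, i != ord0 -> forall v, v \in Ds i -> fcomp g phi D v \in Ds i)].

End Defs.

(* Main.v *)
Require Import Defs.
From HB Require Import structures.
From mathcomp Require Import all_boot all_order all_algebra.
From mathcomp Require Import all_classical all_reals all_analysis.
From Stdlib Require Import ClassicalEpsilon.
From mathcomp Require Import lra.
Import Order.TTheory GRing.Theory Num.Theory.
Local Open Scope ring_scope.
Set Implicit Arguments. Unset Strict Implicit.

Section IP.
Variables (R : realType) (V : vectType R) (g : V -> V -> R).
Hypothesis Hg : inner_product g.
Let Hg' : [/\ forall a u v w, g (a *: u + v) w = a * g u w + g v w,
      forall u v, g u v = g v u
    & forall u, u != 0 -> 0 < g u u] := Hg.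

Lemma gDl u v w : g (u + v) w = g u w + g v w.
Proof. by case: Hg' => H _ _; rewrite -{1}[u]scale1r H mul1r. Qed.
Lemma g0l w : g 0 w = 0.
Proof.
case: Hg' => H _ _; have := H 1 0 0 w; rewrite scale1r addr0 mul1r => /eqP.
by rewrite eq_sym -subr_eq0 addrK => /eqP.
Qed.
Lemma gZl a u w : g (a *: u) w = a * g u w.
Proof. by case: Hg' => H _ _; rewrite -[a *: u]addr0 H g0l addr0. Qed.
Lemma gC u v : g u v = g v u.
Proof. by case: Hg'. Qed.
Lemma gNl u w : g (- u) w = - g u w.
Proof. by rewrite -scaleN1r gZl mulN1r. Qed.
Lemma gBl u v w : g (u - v) w = g u w - g v w.
Proof. by rewrite gDl gNl. Qed.
Lemma gDr u v w : g w (u + v) = g w u + g w v.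
Proof. by rewrite gC gDl !(gC w). Qed.
Lemma gZr a u w : g w (a *: u) = a * g w u.
Proof. by rewrite gC gZl gC. Qed.
Lemma g0r w : g w 0 = 0.
Proof. by rewrite gC g0l. Qed.
Lemma gNr u w : g w (- u) = - g w u.
Proof. by rewrite gC gNl gC. Qed.
Lemma gBr u v w : g w (u - v) = g w u - g w v.
Proof. by rewrite gDr gNr. Qed.
Lemma g_self0 u : g u u = 0 -> u = 0.
Proof.
case: Hg' => _ _ H e; apply/eqP; apply: contraT => /H; by rewrite e ltxx.
Qed.
Lemma g_ge0 u : 0 <= g u u.
Proof.
case: Hg' => _ _ H; have [->|/H/ltW //] := eqVneq u 0; by rewrite g0l.
Qed.

Lemma orth_sum (I : finType) (P : pred I) (Us : I -> {vspace V}) y :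
  (forall i, P i -> forall x, x \in Us i -> g x y = 0) ->
  forall x, x \in (\sum_(i | P i) Us i)%VS -> g x y = 0.
Proof.
move=> H; apply: (big_ind (fun S : {vspace V} => forall x, x \in S -> g x y = 0)).
- by move=> x; rewrite memv0 => /eqP ->; rewrite g0l.
- move=> S1 S2 H1 H2 x /memv_addP [a Ha [b Hb ->]]; by rewrite gDl H1 ?H2 ?addr0.
- exact: H.
Qed.

Lemma subB_sub (u p q : V) : (u - p) - (u - q) = q - p.
Proof. by rewrite opprB addrC addrA subrK. Qed.

Lemma proj_exists_span (s : seq V) u :
  exists p, p \in (span s) /\ forall y, y \in (span s) -> g (u - p) y = 0.
Proof.
elim: s u => [|x s IH] u.
  exists 0; split; first exact: mem0v.
  by move=> y; rewrite span_nil memv0 => /eqP ->; rewrite g0r.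
have [p [Hp Hpo]] := IH u.
have [q [Hq Hqo]] := IH x.
set x' := x - q.
have Hx'o : forall y, y \in (span s) -> g x' y = 0 by [].
have Hx's : x' \in (span (x :: s)).
  rewrite span_cons; apply: rpredB; first by apply/memv_addP; exists x; rewrite ?memv_line //; exists 0; rewrite ?mem0v ?addr0.
  by apply/memv_addP; exists 0; rewrite ?mem0v //; exists q; rewrite ?add0r.
have Hgen : forall y, y \in (span (x :: s)) -> exists a, exists2 z, z \in (span s) & y = a *: x' + z.
  move=> y; rewrite span_cons => /memv_addP [y1 /vlineP [a ->] [z Hz ->]].
  exists a; exists (a *: q + z); first by rewrite rpredD // rpredZ.
  by rewrite /x' scalerBr addrA subrK.
clearbody x'.
have [x'0|x'n0] := eqVneq (g x' x') 0.
  have /g_self0 e := x'0.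
  exists p; split.
    by rewrite span_cons; apply/memv_addP; exists 0; rewrite ?mem0v //; exists p; rewrite ?add0r.
  move=> y /Hgen [a [z Hz ->]]; by rewrite e scaler0 add0r Hpo.
exists (p + (g (u - p) x' / g x' x') *: x'); split.
  apply: rpredD; last exact: rpredZ.
  by rewrite span_cons; apply/memv_addP; exists 0; rewrite ?mem0v //; exists p; rewrite ?add0r.
move=> y /Hgen [a [z Hz ->]].
have Hz1 := Hpo z Hz; have Hz2 := Hx'o z Hz.
rewrite opprD addrA; move: (u - p) Hz1 => up Hz1.
rewrite gDr gZr !gBl !gZl Hz1 Hz2 divfK //.
by rewrite subrr mulr0 add0r mulr0 subrr.
Qed.

Lemma proj_exists (U : {vspace V}) u :
  exists p, p \in U /\ forall y, y \in U -> g (u - p) y = 0.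
Proof. by rewrite -(span_basis (vbasisP U)); apply: proj_exists_span. Qed.

Lemma gproj_char (U : {vspace V}) u p : p \in U ->
  (forall y, y \in U -> g (u - p) y = 0) -> gproj g (fun y => y \in U) u = p.
Proof.
move=> Hp Ho; rewrite /gproj.
have [Hq Hqo] := epsilon_spec (inhabits (0:V))
  (fun p => p \in U /\ forall y, y \in U -> g (u - p) y = 0) (proj_exists U u).
move: (epsilon _ _) Hq Hqo => q Hq Hqo.
apply/eqP; rewrite -subr_eq0; apply/eqP; apply: g_self0.
have e : q - p = (u - p) - (u - q) by rewrite subB_sub.
by rewrite {1}e gBl Ho ?Hqo ?rpredB // subrr.
Qed.

Lemma gprojC_char (U : {vspace V}) u :
  gproj g (orthc g U) u = u - gproj g (fun y => y \in U) u.
Proof.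
have [p [Hp Hpo]] := proj_exists U u.
rewrite (@gproj_char U u p Hp Hpo) /gproj.
have ex : exists p0, orthc g U p0 /\ forall y, orthc g U y -> g (u - p0) y = 0.
  exists (u - p); split; first exact: Hpo.
  by move=> y Hy; rewrite opprB addrC subrK gC Hy.
have [Hq Hqo] := epsilon_spec (inhabits (0:V))
  (fun p => orthc g U p /\ forall y, orthc g U y -> g (u - p) y = 0) ex.
move: (epsilon _ _) Hq Hqo => q Hq Hqo.
have Hd : orthc g U (q - (u - p)) by move=> y Hy; rewrite gBl Hq // Hpo // subrr.
apply/eqP; rewrite -subr_eq0; apply/eqP; apply: g_self0.
have e : q - (u - p) = (u - (u - p)) - (u - q) by rewrite subB_sub.
by rewrite {1}e gBl Hqo // (_ : u - (u - p) = p) ?(gC p) ?Hd ?subrr // opprB addrC subrK.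
Qed.

End IP.

Section Str.
Variables (R : realType) (V : vectType R) (eps : R) (phi : 'End(V)) (xi : V) (g : V -> V -> R).
Hypothesis Hs : almost_eps_contact_metric eps phi xi g.
Let Hs' : [/\ eps = 1 \/ eps = -1,
      inner_product g,
      g xi xi = 1,
      forall X Y, g (phi X) Y = eps * g X (phi Y)
    & forall X, phi (phi X) = eps *: (X - g X xi *: xi)] := Hs.
Lemma Hg : inner_product g. Proof. by case: Hs'. Qed.
Lemma eps2 : eps * eps = 1. Proof. by case: Hs' => [[]->]; rewrite ?mulr1 ?mulrNN ?mulr1. Qed.
Lemma eps_neq0 : eps != 0.
Proof. apply/eqP => e; have := eps2; rewrite e mul0r => /eqP; by rewrite eq_sym oner_eq0. Qed.
Lemma gphi X Y : g (phi X) Y = eps * g X (phi Y). Proof. by case: Hs'. Qed.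
Lemma phiphi X : phi (phi X) = eps *: (X - g X xi *: xi). Proof. by case: Hs'. Qed.
Lemma gxixi : g xi xi = 1. Proof. by case: Hs'. Qed.
Lemma phixi : phi xi = 0.
Proof.
have e : phi (phi xi) = 0 by rewrite phiphi gxixi scale1r subrr scaler0.
by apply: (g_self0 Hg); rewrite gphi e (g0r Hg) mulr0.
Qed.
Lemma gphi_xi X : g (phi X) xi = 0.
Proof. by rewrite gphi phixi (g0r Hg) mulr0. Qed.
Lemma gphiphi X Y : g (phi X) (phi Y) = g X Y - g Y xi * g X xi.
Proof.
rewrite gphi phiphi (gZr Hg) (gBr Hg) (gZr Hg) mulrA eps2 mul1r //.
Qed.

Definition P (U : {vspace V}) u := gproj g (fun y => y \in U) u.
Lemma P_spec U u : P U u \in U /\ forall y, y \in U -> g (u - P U u) y = 0.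
Proof.
have [p [Hp Hpo]] := proj_exists Hg U u.
by rewrite /P (@gproj_char _ _ _ Hg U u p Hp Hpo).
Qed.
Lemma P_id (U : {vspace V}) x : x \in U -> P U x = x.
Proof. move=> Hx; apply: (gproj_char Hg) => // y _; by rewrite subrr (g0l Hg). Qed.
Lemma P_lin U a u v : P U (a *: u + v) = a *: P U u + P U v.
Proof.
have [H1 H1o] := P_spec U u; have [H2 H2o] := P_spec U v.
apply: (gproj_char Hg); first by rewrite rpredD ?rpredZ.
move=> y Hy.
have -> : a *: u + v - (a *: P U u + P U v) = a *: (u - P U u) + (v - P U v).
  by rewrite scalerBr opprD addrACA.
by rewrite (gDl Hg) (gZl Hg) H1o // H2o // mulr0 addr0.
Qed.
Lemma P_D U u v : P U (u + v) = P U u + P U v.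
Proof. by rewrite -{1}[u]scale1r P_lin scale1r. Qed.
Lemma P_Z U a u : P U (a *: u) = a *: P U u.
Proof. by rewrite -[a *: u]addr0 P_lin (P_id (mem0v U)) addr0. Qed.
Lemma P_B U u v : P U (u - v) = P U u - P U v.
Proof. by rewrite P_D -scaleN1r P_Z scaleN1r. Qed.

Definition ff D v := P D (phi v).
Definition ww D v := phi v - ff D v.
Lemma ff_lin D a u v : ff D (a *: u + v) = a *: ff D u + ff D v.
Proof. by rewrite /ff linearP P_lin. Qed.
Lemma ff_D D u v : ff D (u + v) = ff D u + ff D v.
Proof. by rewrite /ff linearD P_D. Qed.
Lemma ff_B D u v : ff D (u - v) = ff D u - ff D v.
Proof. by rewrite /ff linearB P_B. Qed.
Lemma ff0 D : ff D 0 = 0.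
Proof. by rewrite /ff linear0 (P_id (mem0v D)). Qed.
Lemma ww_lin D a u v : ww D (a *: u + v) = a *: ww D u + ww D v.
Proof.
by rewrite /ww ff_lin linearP scalerBr opprD addrACA.
Qed.
Lemma ww_orth (D : {vspace V}) v y : y \in D -> g (ww D v) y = 0.
Proof. by move=> Hy; have [_ H] := P_spec D (phi v); apply: H. Qed.
Lemma ff_in D v : ff D v \in D.
Proof. by have [H _] := P_spec D (phi v). Qed.

Section Slant.
Variables (D U : {vspace V}) (th : R).
Hypotheses (HUD : (U <= D)%VS) (Hxi : forall v, v \in D -> g v xi = 0)
  (Hsl : slant_at g phi U th) (HfU : forall v, v \in U -> ff D v \in U).

Lemma PU_phi v : v \in U -> P U (phi v) = ff D v.
Proof.
move=> Hv; apply: (gproj_char Hg); first exact: HfU.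
by move=> y Hy; apply: ww_orth; apply: (subvP HUD).
Qed.

Lemma ff_norm v : v \in U -> g (ff D v) (ff D v) = cos th ^+ 2 * g v v.
Proof.
move=> Hv; have [->|vn0] := eqVneq v 0; first by rewrite ff0 (g0l Hg) mulr0.
have Hvxi : g v xi = 0 by apply: Hxi; apply: (subvP HUD).
case: Hsl => _ _ /(_ v Hv vn0) [_ [_ Hc]].
move: Hc; rewrite (_ : gproj g (fun y => y \in U) (phi v) = ff D v); last exact: PU_phi Hv.
rewrite /Defs.gnorm gphiphi Hvxi mul0r subr0 => Hc.
have gpos : 0 < g v v by case: Hg => _ _ H; apply: H.
have sn0 : Num.sqrt (g v v) != 0 by rewrite sqrtr_eq0 -ltNge.
have := f_equal (fun t => (t * Num.sqrt (g v v)) ^+ 2) Hc.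
rewrite divfK // exprMn !sqr_sqrtr ?(g_ge0 Hg) ?ltW //; by move=> <-.
Qed.

Lemma ff_polar u v : u \in U -> v \in U -> g (ff D v) (ff D u) = cos th ^+ 2 * g v u.
Proof.
move=> Hu Hv.
have := ff_norm (rpredD Hv Hu).
rewrite ff_D !(gDl Hg) !(gDr Hg) ff_norm // ff_norm // (gC Hg (ff D u)) (gC Hg u).
move: (g (ff D v) (ff D u)) (g v u) (cos th ^+ 2) (g v v) (g u u) => X Y c a b.
rewrite !mulrDr => H.
have : X *+ 2 = (c * Y) *+ 2.
  rewrite !mulr2n; apply: (addrI (c * a)); apply: (addIr (c * b)).
  by rewrite -!addrA [in LHS]addrA H; rewrite -!addrA.
by move/eqP; rewrite -subr_eq0 -mulrnBl mulrn_eq0 /= subr_eq0 => /eqP.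
Qed.

Lemma ff_ff v : v \in U -> ff D (ff D v) = (eps * cos th ^+ 2) *: v.
Proof.
move=> Hv; set z := ff D (ff D v) - (eps * cos th ^+ 2) *: v.
have Hz : z \in U by rewrite rpredB ?HfU ?rpredZ.
have Ho : forall u, u \in U -> g z u = 0.
  move=> u Hu; have HuD : u \in D by apply: (subvP HUD).
  have HfvD : ff D v \in D by apply: (subvP HUD); apply: HfU.
  have e1 : g (ff D (ff D v)) u = g (phi (ff D v)) u.
    by have := ww_orth (ff D v) HuD; rewrite /ww (gBl Hg) => /eqP; rewrite subr_eq0 => /eqP.
  have e2 : g (ff D v) (phi u) = g (ff D v) (ff D u).
    have := ww_orth u HfvD; rewrite /ww (gBl Hg) => /eqP; rewrite subr_eq0 => /eqP h.
    by rewrite (gC Hg (ff D v)) h (gC Hg).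
  rewrite /z (gBl Hg) e1 gphi e2 ff_polar // (gZl Hg) mulrA subrr //.
have : g z z = 0 by apply: Ho.
by move/(g_self0 Hg) => /eqP; rewrite subr_eq0 => /eqP.
Qed.

Lemma ff_phi v : v \in D -> ff D (phi v) = eps *: v.
Proof. by move=> Hv; rewrite /ff phiphi Hxi // scale0r subr0 P_Z P_id. Qed.

Lemma ff_ww v : v \in U -> ff D (ww D v) = (eps * sin th ^+ 2) *: v.
Proof.
move=> Hv; rewrite /ww ff_B ff_phi ?(subvP HUD) // ff_ff //.
rewrite -scalerBl; congr (_ *: _).
by rewrite -{1}[eps]mulr1 -(cos2Dsin2 th) mulrDr addrAC subrr add0r.
Qed.

Lemma sin_neq0 : eps * sin th ^+ 2 != 0.
Proof.
rewrite mulf_eq0 negb_or eps_neq0 /= expf_eq0 /= gt_eqF //.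
case: Hsl => _ /andP [h1 h2] _; apply: sin_gt0_pi; have := pi_gt0 R.
by move=> hp; apply/andP; split => //; lra.
Qed.
End Slant.
End Str.

Section LinEnd.
Variables (R : realType) (V : vectType R) (h : V -> V).
Hypothesis hl : linear h.
Definition hh := h.
HB.instance Definition _ := GRing.isLinear.Build R V V *:%R hh hl.
Lemma lin_End_aux : exists F : 'End(V), forall v, F v = h v.
Proof. by exists (linfun hh) => v; rewrite lfunE. Qed.
End LinEnd.
Lemma lin_End (R : realType) (V : vectType R) (h : V -> V) :
  linear h -> exists F : 'End(V), forall v, F v = h v.
Proof. exact: lin_End_aux. Qed.

Theorem mainTheorem6 (R : realType) (V : vectType R) (eps : R) (phi : 'End(V))
    (xi : V) (g : V -> V -> R) (k : nat) (D : {vspace V})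
    (Ds : 'I_k.+1 -> {vspace V}) (theta : 'I_k.+1 -> R) :
  (1 <= k)%N ->
  almost_eps_contact_metric eps phi xi g ->
  k_slant_at g phi D Ds theta ->
  (forall v, v \in D -> g v xi = 0) ->
  let f := fcomp g phi D in
  let w := wcomp g phi D in
  let G := orthc g (D + <[xi]>)%VS in
  (forall i : 'I_k.+1, i != ord0 ->
     [/\ (forall y, (exists2 v, v \in Ds i & y = f (w v)) <-> y \in Ds i),
         {in Ds i &, injective w},
         (forall a b, (exists2 u, u \in Ds i & a = w u) ->
                      (exists2 u, u \in Ds i & b = w u) -> f a = f b -> a = b)
       & exists W : {vspace V},
           (forall y, y \in W <-> exists2 v, v \in Ds i & y = w v)
           /\ \dim W = \dim (Ds i)])
  /\ (forall y, (exists2 u, G u & y = f u) <->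
                y \in (\sum_(i < k.+1 | i != ord0) Ds i)%VS).
Proof.
move=> _ Hs Hk Hxi f w G.
have Hg := Hg Hs.
case: Hk => HD Horth _ [Hslant [H0 HfDs]].
have wE : forall v, w v = ww phi g D v.
  by move=> v; rewrite /w /wcomp (gprojC_char Hg).
have HsubD : forall i, (Ds i <= D)%VS.
  by move=> i; rewrite HD; apply: (sumv_sup i) => //; exact: subv_refl.
have KEY : forall i, i != ord0 -> forall v, v \in Ds i ->
    f (w v) = (eps * sin (theta i) ^+ 2) *: v.
  move=> i i0 v Hv; rewrite wE.
  exact: (ff_ww Hs (HsubD i) Hxi (Hslant i i0) (HfDs i i0) Hv).
have P1 : forall i, i != ord0 -> forall y,
    (exists2 v, v \in Ds i & y = f (w v)) <-> y \in Ds i.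
  move=> i i0 y; have cn0 := sin_neq0 Hs (Hslant i i0); split.
    by move=> [v Hv ->]; rewrite (KEY i i0 v Hv) rpredZ.
  move=> Hy; exists ((eps * sin (theta i) ^+ 2)^-1 *: y); first by rewrite rpredZ.
  by rewrite (KEY i i0) ?rpredZ // scalerA mulfV // scale1r.
split.
  move=> i i0; have cn0 := sin_neq0 Hs (Hslant i i0).
  have winj : {in Ds i &, injective w}.
    move=> u v Hu Hv e; have := congr1 f e; rewrite !(KEY i i0) //; exact: scalerI.
  split.
  - exact: P1.
  - exact: winj.
  - move=> a b [u Hu ->] [u' Hu' ->] e; congr w.
    by move: e; rewrite !(KEY i i0) //; exact: scalerI.
  - have [F HF] : exists F : 'End(V), forall v, F v = w v.
      have [F HF] := @lin_End R V (ww phi g D) (fun a u v => ww_lin Hs D a u v).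
      by exists F => v; rewrite HF wE.
    exists (F @: Ds i)%VS; split.
      move=> y; split.
        by move/memv_imgP => [v Hv ->]; exists v; rewrite ?HF.
      by move=> [v Hv ->]; apply/memv_imgP; exists v; rewrite ?HF.
    apply: limg_dim_eq; apply/eqP; rewrite -subv0; apply/subvP => x.
    rewrite memv_cap memv_ker memv0 => /andP [Hx /eqP Fx].
    apply/eqP; apply: winj; rewrite ?mem0v // -!HF Fx linear0 //.
move=> y; split.
  move=> [u Gu ->].
  have DE : D = (Ds ord0 + \sum_(i < k.+1 | i != ord0) Ds i)%VS.
    by rewrite HD (bigD1 ord0).
  have fuD : f u \in D by exact: (ff_in Hs).
  have orth0 : forall z, z \in Ds ord0 -> g (f u) z = 0.
    move=> z Hz; have HzD : z \in D by apply: (subvP (HsubD ord0)).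
    have := ww_orth Hs u HzD; rewrite /ww (gBl Hg) => /eqP; rewrite subr_eq0 => /eqP <-.
    rewrite (gphi Hs); apply/eqP; rewrite mulf_eq0; apply/orP; right; apply/eqP.
    apply: Gu; apply/memv_addP; exists (phi z); first by apply: (subvP (HsubD ord0)); apply: H0.
    by exists 0; rewrite ?mem0v ?addr0.
  move: fuD; rewrite {1}DE => /memv_addP [x0 Hx0 [e He fe]].
  have ex0 : g e x0 = 0.
    apply: (orth_sum Hg _ He) => i i0 x Hx; exact: (Horth i ord0 i0).
  have : g x0 x0 = 0.
    by have := orth0 x0 Hx0; rewrite fe (gDl Hg) ex0 addr0.
  by move/(g_self0 Hg) => x00; rewrite fe x00 add0r.
move=> Hy.
pose K (S : {vspace V}) := forall y, y \in S -> exists2 u, G u & y = f u.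
suff : K (\sum_(i < k.+1 | i != ord0) Ds i)%VS by move/(_ y Hy).
apply: big_ind.
- move=> z; rewrite memv0 => /eqP ->; exists 0; last exact: (esym (ff0 Hs D)).
  by move=> t _; rewrite (g0l Hg).
- move=> S1 S2 K1 K2 z /memv_addP [z1 /K1 [u1 G1 ->] [z2 /K2 [u2 G2 ->] ->]].
  exists (u1 + u2); last exact: (esym (ff_D Hs D u1 u2)).
  by move=> t Ht; rewrite (gDl Hg) G1 // G2 // addr0.
- move=> i i0 z /(P1 i i0) [v Hv ->]; exists (w v) => //.
  move=> t /memv_addP [d Hd [t2 /vlineP [a ->] ->]].
  rewrite wE (gDr Hg) (gZr Hg) (ww_orth Hs) // /ww (gBl Hg) (gphi_xi Hs) Hxi ?(ff_in Hs) //.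
  by rewrite subrr mulr0 addr0.
Qed.
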